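(* Let $p\ge1$, $\phi_1,\dots,\phi_p:\mathbb Z\to\mathbb C$, $s\in\mathbb Z$, and let $y:\{s-p+1,s-p+2,\dots\}\to\mathbb C$ satisfy $y_t=\sum_{l=1}^p\phi_l(t)y_{t-l}$ for all $t\ge s+1$. Then for all $t\ge s-p+1$, $$y_t=\sum_{m=1}^{p}\xi^{(m)}_{t,s}\,y_{s-m+1}.$$
   Context: Convention: $\phi_l(t)=0$ for $l>p$. For integers $t>s$ and $1\le m\le p$, $\Phi^{(m)}_{t,s}$ is the $(t-s)\times(t-s)$ lower Hessenberg matrix whose $(i,j)$ entry is: $\phi_{m+i-1}(s+i)$ if $j=1$; $-1$ if $j=i+1$; $\phi_{i-j+1}(s+i)$ if $2\le j\le i$; $0$ if $j>i+1$. For $t\ge s-p+1$: $\xi^{(m)}_{t,s}=\det\Phi^{(m)}_{t,s}$ if $t>s$; $\xi^{(m)}_{t,s}=1$ if $t=s-m+1$; $\xi^{(m)}_{t,s}=0$ if $s-p+1\le t\le s$, $t\ne s-m+1$. *)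

(* Defs.v *)
From HB Require Import structures.
From mathcomp Require Import all_boot all_order all_algebra.
From mathcomp Require Import complex.
From mathcomp Require Import Rstruct.
Set Implicit Arguments. Unset Strict Implicit. Unset Printing Implicit Defensive.
Import Order.TTheory GRing.Theory Num.Theory.
Local Open Scope ring_scope.

Definition CC : Type := complex Rdefinitions.R.

(* phi_l(t), extended by the convention phi_l = 0 for l > p (and l = 0, never used). *)
Definition phic (p : nat) (phi : nat -> int -> CC) (l : nat) (t : int) : CC :=
  if (0 < l <= p)%N then phi l t else 0.

(* The (t-s) x (t-s) lower Hessenberg matrix Phi^{(m)}_{t,s}; indices are 0-based
   here: row i, column j correspond to the paper's (i+1, j+1). *)
Definition PhiMx (p : nat) (phi : nat -> int -> CC) (m : nat) (t s : int)
  : 'M[CC]_(`|t - s|%N) :=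
  \matrix_(i, j)
    if (j == 0 :> nat) then phic p phi (m + i) (s + (i.+1)%:Z)
    else if (j == i.+1 :> nat) then -1
    else if (j <= i)%N then phic p phi (i - j + 1) (s + (i.+1)%:Z)
    else 0.

(* xi^{(m)}_{t,s}, meaningful for t >= s - p + 1. *)
Definition xi (p : nat) (phi : nat -> int -> CC) (m : nat) (t s : int) : CC :=
  if s < t then \det (PhiMx p phi m t s)
  else if t == s - m%:Z + 1 then 1 else 0.

(* Main.v *)
Require Import Defs.
From HB Require Import structures.
From mathcomp Require Import all_boot all_order all_algebra.
From mathcomp Require Import complex.
From mathcomp Require Import Rstruct.
From mathcomp Require Import zify.
Import Order.TTheory GRing.Theory Num.Theory.
Local Open Scope ring_scope.

Lemma hess (R : comNzRingType) n (f : nat -> nat -> R) :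
  (forall i j, (i <= n)%N -> (j <= n)%N -> (i.+1 < j)%N -> f i j = 0) -> (forall i, (i < n)%N -> f i i.+1 = -1) ->
  \det (\matrix_(i < n.+1, j < n.+1) f i j) =
  \sum_(k < n.+1) f n k * \det (\matrix_(i < k, j < k) f i j).
Proof.
elim: n f => [|n IH] f Hz Hd.
  by rewrite big_ord1 (expand_det_row _ ord0) big_ord1 /cofactor !mxE /= !det_mx00 expr0 mul1r mulr1.
rewrite [LHS](expand_det_col _ (@ord_max n.+1)) big_ord_recr /= big_ord_recr /=.
rewrite big1 ?add0r; last first.
  move=> i _.
  have Hi := ltn_ord i.
  by rewrite mxE Hz ?mul0r //= ltnW // ltnW.
rewrite big_ord_recr; congr (_ + _).
- set g := fun i j => f (if i == n then n.+1 else i) j.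
  rewrite /cofactor !mxE /=.
  have -> : row' (widen_ord (leqnSn n.+1) ord_max) (col' ord_max (\matrix_(i < n.+2, j < n.+2) f i j)) =
     \matrix_(i < n.+1, j < n.+1) g i j.
    apply/matrixP => a b; rewrite !mxE /= /g /bump.
    rewrite [(n.+1 <= b)%N]leqNgt ltn_ord add0n.
    case: (ltngtP n a) => H.
    all: try by have := ltn_ord a; rewrite ltnS leqNgt H.
    all: try by rewrite add0n.
    by rewrite -H add1n.
  rewrite IH; last 2 first.
  + move=> i j Hi Hj Hij; rewrite /g; case: (i =P n) => [Ei|_].
      by move: Hij; rewrite Ei ltnNge (leqW Hj).
    by apply: Hz => //; apply: leqW.
  + by move=> i Hi; rewrite /g (ltn_eqF Hi) Hd // ltnW.
  rewrite Hd // -signr_odd addnS addnn /= odd_double /= expr1 mulN1r mulN1r opprK.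
  apply: eq_bigr => k _; rewrite /g eqxx; congr (_ * \det _).
  apply/matrixP => a b; rewrite !mxE.
  have := ltn_ord a; have := ltn_ord k; rewrite ltnS => Hk Ha.
  by rewrite (ltn_eqF (leq_trans Ha Hk)).
- rewrite /cofactor mxE.
  have E : row' ord_max (col' ord_max (\matrix_(i < n.+2, j < n.+2) f i j)) =
     \matrix_(i < n.+1, j < n.+1) f i j.
    by apply/matrixP => a b; rewrite !mxE !lift_max.
  by rewrite E addnn -signr_odd odd_double expr0 mul1r.
Qed.

Lemma sum_nat_single (F : nat -> CC) a b k : (a <= k < b)%N ->
  (forall i, (a <= i < b)%N -> i != k -> F i = 0) -> \sum_(a <= i < b) F i = F k.
Proof.
move=> /andP[Hak Hkb] HF.
rewrite (big_cat_nat Hak (ltnW Hkb)) /= [X in _ + X]big_ltn //.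
rewrite [X in X + _]big_nat_cond [X in X + _]big1 ?add0r; last first.
  move=> i /andP[/andP[H1 H2] _]; apply: HF; first by rewrite H1 (ltn_trans H2).
  by rewrite ltn_eqF.
rewrite big_nat_cond big1 ?addr0 // => i /andP[/andP[H1 H2] _]; apply: HF.
  by rewrite H2 (leq_trans Hak (ltnW H1)).
by rewrite gtn_eqF.
Qed.

Section Main.
Variables (p : nat) (phi : nat -> int -> CC) (s : int).

Definition Ff m (i j : nat) : CC :=
  if j == 0 then phic p phi (m + i) (s + (i.+1)%:Z)
  else if j == i.+1 then -1
  else if (j <= i)%N then phic p phi (i - j + 1) (s + (i.+1)%:Z)
  else 0.

Definition D m k := \det (\matrix_(i < k, j < k) Ff m i j).

Lemma xi_pos m t : s < t -> xi p phi m t s = D m `|t - s|.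
Proof. by move=> H; rewrite /xi H. Qed.

Lemma xi_spos m (k : nat) : (0 < k)%N -> xi p phi m (s + k%:Z) s = D m k.
Proof.
move=> Hk; rewrite xi_pos; last by lia.
by rewrite (addrC s) addrK absz_nat.
Qed.

Lemma xi_neg m t : ~~ (s < t) -> xi p phi m t s = if t == s - m%:Z + 1 then 1 else 0.
Proof. by move=> H; rewrite /xi (negbTE H). Qed.

Lemma D0 m : D m 0 = 1.
Proof. by rewrite /D det_mx00. Qed.

Lemma D_rec m n : D m n.+1 = phic p phi (m + n) (s + (n.+1)%:Z) +
  \sum_(1 <= k < n.+1) phic p phi (n - k + 1) (s + (n.+1)%:Z) * D m k.
Proof.
rewrite /D hess; last 2 first.
- move=> i j _ _ Hij; rewrite /Ff.
  rewrite (gtn_eqF (leq_trans (ltn0Sn _) Hij)) (gtn_eqF Hij) leqNgt (ltn_trans (ltnSn _) Hij) //.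
- by move=> i _; rewrite /Ff eqxx.
rewrite -(big_mkord xpredT (fun k => Ff m n k * \det (\matrix_(i < k, j < k) Ff m i j))).
rewrite big_ltn // det_mx00 mulr1 /Ff eqxx; congr (_ + _).
apply: eq_big_nat => k /andP[Hk1 Hk2].
by rewrite (gtn_eqF Hk1) (ltn_eqF Hk2) -ltnS Hk2.
Qed.

Lemma xrec m n : (1 <= m <= p)%N ->
  xi p phi m (s + (n.+1)%:Z) s =
  \sum_(1 <= l < p.+1) phi l (s + (n.+1)%:Z) * xi p phi m (s + (n.+1)%:Z - l%:Z) s.
Proof.
move=> /andP[Hm1 Hmp].
set t := s + (n.+1)%:Z.
have E1 : \sum_(1 <= l < p.+1) phi l t * xi p phi m (t - l%:Z) s =
          \sum_(1 <= l < (n + p).+1) phic p phi l t * xi p phi m (t - l%:Z) s.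
  rewrite (@big_cat_nat _ _ _ p.+1 1 (n + p).+1) //=; last by rewrite ltnS leq_addl.
  rewrite [X in _ = _ + X]big_nat_cond [X in _ = _ + X]big1 ?addr0; last first.
    by move=> i /andP[/andP[H1 H2] _]; rewrite /phic (leqNgt i p) H1 andbF mul0r.
  apply: eq_big_nat => l /andP[H1 H2]; by rewrite /phic H1 -ltnS H2.
rewrite E1 (@big_cat_nat _ _ _ n.+1 1 (n + p).+1) //=; last by rewrite ltnS leq_addr.
rewrite xi_spos // D_rec addrC; congr (_ + _).
  rewrite [RHS](@sum_nat_single _ n.+1 (n + p).+1 (n + m)); last first.
  - move=> i /andP[H1 H2] Hi /=; rewrite xi_neg; last by rewrite -leNgt /t; lia.
    case: eqP => [E|_]; last by rewrite mulr0.
    by exfalso; move/negP: Hi; apply; apply/eqP; lia.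
  - by apply/andP; split; lia.
  rewrite /= xi_neg; last by rewrite -leNgt /t; lia.
  have -> : (t - (n + m)%:Z == s - m%:Z + 1) by apply/eqP; rewrite /t; lia.
  by rewrite mulr1 addnC.
rewrite [RHS]big_nat_rev /=; apply: eq_big_nat => l /andP[H1 H2].
have -> : (1 + n.+1 - l.+1 = n - l + 1)%N by lia.
have -> : t - (n - l + 1)%:Z = s + l%:Z by rewrite /t; lia.
by rewrite xi_spos.
Qed.

End Main.

Theorem proposition3 (p : nat) (phi : nat -> int -> CC) (s : int) (y : int -> CC) :
  (1 <= p)%N ->
  (forall t : int, s + 1 <= t ->
     y t = \sum_(1 <= l < p.+1) phi l t * y (t - l%:Z)) ->
  forall t : int, s - p%:Z + 1 <= t ->
     y t = \sum_(1 <= m < p.+1) xi p phi m t s * y (s - m%:Z + 1).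
Proof.
move=> Hp Hy.
have Hneg : forall t, s - p%:Z + 1 <= t -> ~~ (s < t) ->
    y t = \sum_(1 <= m < p.+1) xi p phi m t s * y (s - m%:Z + 1).
  move=> t H1 H2; rewrite -leNgt in H2.
  have Hk : (1 <= absz (s - t + 1)%R < p.+1)%N by apply/andP; split; lia.
  rewrite (@sum_nat_single _ 1 p.+1 (absz (s - t + 1)%R) Hk); last first.
    move=> i /andP[Hi1 Hi2] /eqP Hi /=; rewrite xi_neg; last by rewrite -leNgt.
    case: eqP => [E|_]; last by rewrite mul0r.
    by exfalso; apply: Hi; lia.
  rewrite /= xi_neg; last by rewrite -leNgt.
  have -> : (t == s - (absz (s - t + 1)%R)%:Z + 1) by apply/eqP; lia.
  by rewrite mul1r; congr y; lia.
suff H : forall k : nat, forall t, s - p%:Z + 1 <= t -> t <= s - p%:Z + 1 + k%:Z ->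
    y t = \sum_(1 <= m < p.+1) xi p phi m t s * y (s - m%:Z + 1).
  move=> t Ht; apply: (H (absz (t - (s - p%:Z + 1))%R) t Ht); lia.
elim => [|k IH] t H1 H2.
  by apply: Hneg => //; rewrite -leNgt; lia.
case: (boolP (s < t)) => Hst; last exact: Hneg.
have Et : t = s + ((absz (t - s)%R).-1).+1%:Z by lia.
set n := (absz (t - s)%R).-1 in Et.
rewrite Hy; last by lia.
have E2 : \sum_(1 <= l < p.+1) phi l t * y (t - l%:Z) =
  \sum_(1 <= l < p.+1) \sum_(1 <= m < p.+1)
     phi l t * xi p phi m (t - l%:Z) s * y (s - m%:Z + 1).
  apply: eq_big_nat => l /andP[Hl1 Hl2].
  rewrite (IH (t - l%:Z)); [|lia|lia].
  by rewrite mulr_sumr; apply: eq_bigr => m _; rewrite mulrA.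
rewrite E2 exchange_big_nat /=.
apply: eq_big_nat => m /andP[Hm1 Hm2].
rewrite Et xrec; last by apply/andP; split; lia.
rewrite -Et mulr_suml.
by apply: eq_bigr.
Qed.
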